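(* Let $G=(V,E)$ be a directed graph, $T=\{t_1,\dots,t_{n_T}\}$ a finite task set, and for each $t_j\in T$ let $W^j=\{w^j_{uv}\in[0,1]:(u,v)\in E\}$. Let $\mathcal{L}:V\to\{a_1,\dots,a_{n_A}\}$ be a location map and $q_j^k\ge 0$ completion qualities for each task $t_j$ and sub-area $a_k$. Let $V_R\subseteq V$ and for each $v_i\in V_R$ let $T_i\subseteq T$. Then the multi-task diffusion function $f:2^{V_R}\to\mathbb{R}_{\ge 0}$ defined in the context is monotone and submodular, i.e. for all $S_1\subseteq S_2\subseteq V_R$ and $u\in V_R\setminus S_2$: $f(S_1)\le f(S_2)$ and $f(S_1\cup\{u\})-f(S_1)\ge f(S_2\cup\{u\})-f(S_2)$.
   Context: For a task $t_j$, a realization $g$ of $W^j$ is a random spanning subgraph $(V,E_g)$ of $G$ in which each edge $(u,v)\in E$ is included independently with probability $w^j_{uv}$; $\Pr[g;W^j]=\prod_{e\in E_g}w^j_e\prod_{e\in E\setminus E_g}(1-w^j_e)$. For $A\subseteq V$, $I_g(A)$ is the set of nodes reachable from a node of $A$ by a directed path in $g$ (including $A$). For $S\subseteq V_R$, $S^j=\{v_i\in S: t_j\in T_i\}$. The multi-task diffusion function is $f(S)=\frac{1}{n_T}\sum_{t_j\in T}\sum_{g}\Pr[g;W^j]\sum_{v\in I_g(S^j)}q_j^{\mathcal{L}(v)}$. *)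

(* Defs.v *)
From mathcomp Require Import all_boot all_order all_algebra.
Set Implicit Arguments. Unset Strict Implicit. Unset Printing Implicit Defensive.
Import Order.TTheory GRing.Theory Num.Theory.
Local Open Scope ring_scope.

Section MultiTask.
Variables (R : realFieldType) (V : finType) (E : {set V * V}).

Definition realization_prob (w : V -> V -> R) (g : {set V * V}) : R :=
  \prod_(e in E) (if e \in g then w e.1 e.2 else 1 - w e.1 e.2).

Definition reach_set (g : {set V * V}) (A : {set V}) : {set V} :=
  [set v | [exists a in A, connect (fun x y => (x, y) \in g) a v]].

Definition mt_diffusion (nT nA : nat) (w : 'I_nT -> V -> V -> R)
  (L : V -> 'I_nA) (q : 'I_nT -> 'I_nA -> R) (Ti : V -> {set 'I_nT})
  (S : {set V}) : R :=
  (nT%:R)^-1 * \sum_(j < nT) \sum_(g : {set V * V} | g \subset E)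
     realization_prob (w j) g *
     \sum_(v in reach_set g [set x in S | j \in Ti x]) q j (L v).
End MultiTask.

(* Main.v *)
Require Import Defs.
From mathcomp Require Import all_boot all_order all_algebra.
Import Order.TTheory GRing.Theory Num.Theory.
Local Open Scope ring_scope.

Lemma reachU (V : finType) (g : {set V * V}) (A B : {set V}) :
  reach_set g (A :|: B) = reach_set g A :|: reach_set g B.
Proof.
apply/setP => v; rewrite !inE; apply/existsP/orP.
- case=> a /andP [/setUP [] Ha Hc]; [left|right]; apply/existsP; exists a;
  by rewrite Ha Hc.
- case=> /existsP [a /andP [Ha Hc]]; exists a; rewrite inE Ha ?orbT //.
Qed.

Lemma reachS (V : finType) (g : {set V * V}) (A B : {set V}) :
  A \subset B -> reach_set g A \subset reach_set g B.
Proof.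
move=> AB; apply/subsetP => v; rewrite !inE => /existsP [a /andP [Ha Hc]].
by apply/existsP; exists a; rewrite (subsetP AB a Ha).
Qed.

Lemma sum_sub (R : realFieldType) (V : finType) (c : V -> R) (X Y : {set V}) :
  X \subset Y -> \sum_(v in Y) c v = \sum_(v in X) c v + \sum_(v in Y :\: X) c v.
Proof.
move=> XY; by rewrite (big_setID X) (setIidPr XY).
Qed.

Lemma sum_le_sub (R : realFieldType) (V : finType) (c : V -> R) (X Y : {set V}) :
  (forall v, 0 <= c v) ->
  X \subset Y -> \sum_(v in X) c v <= \sum_(v in Y) c v.
Proof.
move=> c0 XY; rewrite (@sum_sub _ _ c _ _ XY) lerDl; exact: sumr_ge0.
Qed.

Lemma cov_sub (R : realFieldType) (V : finType) (c : V -> R) (X1 X2 Y : {set V}) :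
  (forall v, 0 <= c v) -> X1 \subset X2 ->
  \sum_(v in X2 :|: Y) c v - \sum_(v in X2) c v <=
  \sum_(v in X1 :|: Y) c v - \sum_(v in X1) c v.
Proof.
move=> c0 X12.
rewrite (@sum_sub _ _ c _ _ (subsetUl X2 Y)) (@sum_sub _ _ c _ _ (subsetUl X1 Y)).
have K : forall a b : R, a + b - a = b by move=> a b; rewrite addrC addKr.
rewrite !K.
apply: sum_le_sub => //; apply/subsetP => v; rewrite !inE.
case/andP => H1 /orP [H|HY]; first by rewrite H in H1.
have H2 : v \notin X1 by apply: contra H1 => /(subsetP X12).
by rewrite H2 HY orbT.
Qed.

Theorem theorem2 (R : realFieldType) (V : finType) (E : {set V * V})
  (nT nA : nat) (w : 'I_nT -> V -> V -> R)
  (hw : forall j u v, (u, v) \in E -> 0 <= w j u v <= 1)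
  (L : V -> 'I_nA) (q : 'I_nT -> 'I_nA -> R)
  (hq : forall j k, 0 <= q j k)
  (VR : {set V}) (Ti : V -> {set 'I_nT}) :
  forall (S1 S2 : {set V}) (u : V),
    S1 \subset S2 -> S2 \subset VR -> u \in VR :\: S2 ->
    mt_diffusion E w L q Ti S1 <= mt_diffusion E w L q Ti S2 /\
    mt_diffusion E w L q Ti (u |: S1) - mt_diffusion E w L q Ti S1 >=
    mt_diffusion E w L q Ti (u |: S2) - mt_diffusion E w L q Ti S2.
Proof.
move=> S1 S2 u S12 _ _.
have c0 : 0 <= (nT%:R : R)^-1 by rewrite invr_ge0 ler0n.
have p0 : forall j g, 0 <= realization_prob E (w j) g.
  move=> j g; apply: prodr_ge0 => [[a b]] /= /(hw j) /andP [H0 H1].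
  by case: ifP => _ //; rewrite subr_ge0.
have Sj : forall j (S : {set V}), S1 \subset S2 ->
   [set x in S1 | j \in Ti x] \subset [set x in S2 | j \in Ti x].
  move=> j S H; apply/subsetP => x; rewrite !inE => /andP [H1 ->].
  by rewrite (subsetP H x H1).
have SU : forall j (S : {set V}), [set x in u |: S | j \in Ti x] =
   [set x in S | j \in Ti x] :|: [set x in [set u] | j \in Ti x].
  move=> j S; apply/setP => x; rewrite !inE; by case: (x == u); case: (x \in S); case: (j \in Ti x).
split.
  rewrite /mt_diffusion; apply: ler_wpM2l => //.
  apply: ler_sum => j _; apply: ler_sum => g _; apply: ler_wpM2l => //.
  apply: sum_le_sub => [v|]; first exact: hq.
  by apply: reachS; apply: Sj.
rewrite /mt_diffusion -!mulrBr; apply: ler_wpM2l => //.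
rewrite -!sumrB; apply: ler_sum => j _; rewrite -!sumrB; apply: ler_sum => g _.
rewrite -!mulrBr; apply: ler_wpM2l => //.
rewrite !SU !reachU; apply: cov_sub => [v|]; first exact: hq.
by apply: reachS; apply: Sj.
Qed.
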